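(* For all real $x,u,v$, $$\sum_{m,n=0}^{\infty}H_{m,n}(x)\frac{u^m}{m!}\frac{v^n}{n!}=\exp\!\left(-u^2+(2u+v)x-uv\right).$$
   Context: For integers $m,n\ge 0$, the two-index Hermite polynomial is $H_{m,n}(x)=\left(-\frac{d}{dx}+2x\right)^m(x^n)$, i.e. the operator $f\mapsto -f'+2xf$ applied $m$ times to $x^n$. *)

(* Defs.v *)
From Stdlib Require Import Reals List Arith Factorial.
Open Scope R_scope.

(* Real polynomials as coefficient lists, lowest degree first:
   [c0; c1; ...; ck] represents c0 + c1 x + ... + ck x^k. *)
Definition rpoly := list R.

Definition peval (p : rpoly) (x : R) : R :=
  fold_right (fun c acc => c + x * acc) 0 p.

Fixpoint padd (p q : rpoly) : rpoly :=
  match p, q with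
  | nil, _ => q
  | _, nil => p
  | a :: p', b :: q' => (a + b) :: padd p' q'
  end.

Definition pscale (a : R) (p : rpoly) : rpoly := map (fun c => a * c) p.

Definition pmulX (p : rpoly) : rpoly := 0 :: p.

(* formal derivative: d/dx (sum c_i x^i) = sum (i+1) c_{i+1} x^i *)
Fixpoint pderiv_aux (k : nat) (p : rpoly) : rpoly :=
  match p with
  | nil => nil
  | c :: p' => (INR k * c) :: pderiv_aux (S k) p'
  end.
Definition pderiv (p : rpoly) : rpoly := pderiv_aux 1 (tl p).

Definition Hop (p : rpoly) : rpoly :=
  padd (pscale (-1) (pderiv p)) (pscale 2 (pmulX p)).

Definition pmonom (n : nat) : rpoly := repeat 0 n ++ (1 :: nil).

Definition H2 (m n : nat) : rpoly := Nat.iter m Hop (pmonom n).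

Definition H2eval (m n : nat) (x : R) : R := peval (H2 m n) x.

(* Main.v *)
Require Import Defs.
From Coquelicot Require Import Coquelicot.
From Stdlib Require Import Reals Arith Factorial Lia Lra List.
Open Scope R_scope.

Lemma peval_padd p q y : peval (padd p q) y = peval p y + peval q y.
Proof.
  revert q; induction p as [|a p IH]; intros [|b q]; simpl; try ring.
  rewrite IH; ring.
Qed.

Lemma peval_pscale a p y : peval (pscale a p) y = a * peval p y.
Proof. induction p as [|b p IH]; simpl; [ring|]. rewrite IH; ring. Qed.

Lemma peval_pmonom n y : peval (pmonom n) y = y ^ n.
Proof. induction n as [|n IH]; simpl; [ring|]. unfold pmonom in IH. rewrite IH; ring. Qed.

Lemma pderiv_aux_S k p y :
  peval (pderiv_aux (S k) p) y = peval (pderiv_aux k p) y + peval p y.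
Proof.
  revert k; induction p as [|c p IH]; intros k; [simpl; ring|].
  change (INR (S k) * c + y * peval (pderiv_aux (S (S k)) p) y = INR k * c + y * peval (pderiv_aux (S k) p) y + (c + y * peval p y)). rewrite IH, S_INR. ring.
Qed.

Lemma pderiv_cons c p y :
  peval (pderiv (c :: p)) y = peval p y + y * peval (pderiv p) y.
Proof.
  unfold pderiv; simpl. destruct p as [|c' p]; simpl; [ring|].
  rewrite pderiv_aux_S. ring.
Qed.

Lemma deriv_eq f x l l' : derivable_pt_lim f x l -> l = l' -> derivable_pt_lim f x l'.
Proof. intros H ->; exact H. Qed.

Lemma deriv_ext f g x l : (forall z, f z = g z) -> derivable_pt_lim f x l -> derivable_pt_lim g x l.
Proof.
  intros E H eps Heps. destruct (H eps Heps) as [d Hd]. exists d.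
  intros h Hh Hhd. rewrite <- !E. apply Hd; auto.
Qed.

Lemma peval_deriv p y : derivable_pt_lim (peval p) y (peval (pderiv p) y).
Proof.
  revert y; induction p as [|c p IH]; intros y.
  - simpl. apply (deriv_ext (fun _ => 0)); [reflexivity|]. apply derivable_pt_lim_const.
  - apply (deriv_ext (fun z => c + z * peval p z)); [reflexivity|].
    apply deriv_eq with (0 + (1 * peval p y + y * peval (pderiv p) y)).
    + apply (derivable_pt_lim_plus (fun _ => c) (fun z => z * peval p z)).
      * apply derivable_pt_lim_const.
      * apply (derivable_pt_lim_mult id (peval p)); [apply derivable_pt_lim_id | apply IH].
    + rewrite pderiv_cons; ring.
Qed.

Lemma peval_Hop p y : peval (Hop p) y = - peval (pderiv p) y + 2 * y * peval p y.
Proof. unfold Hop. rewrite peval_padd, !peval_pscale. unfold pmulX; simpl. ring. Qed.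

Lemma H2_S m n : H2 (S m) n = Hop (H2 m n).
Proof. reflexivity. Qed.

Lemma D_plus f g y a b : derivable_pt_lim f y a -> derivable_pt_lim g y b ->
  derivable_pt_lim (fun z => f z + g z) y (a + b).
Proof. intros; apply (derivable_pt_lim_plus f g); auto. Qed.

Lemma D_scal c f y a : derivable_pt_lim f y a -> derivable_pt_lim (fun z => c * f z) y (c * a).
Proof. intros; apply (derivable_pt_lim_scal f); auto. Qed.

Lemma D_xmul f y a : derivable_pt_lim f y a -> derivable_pt_lim (fun z => z * f z) y (f y + y * a).
Proof.
  intros H. apply deriv_eq with (1 * f y + y * a); [|ring].
  apply (derivable_pt_lim_mult id f); auto. apply derivable_pt_lim_id.
Qed.

Lemma Dform m : forall n y,
  peval (pderiv (H2 m n)) y = INR n * H2eval m (n-1) y + 2 * INR m * H2eval (m-1) n y.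
Proof.
  induction m as [|m IH]; intros n y.
  - unfold H2eval; simpl. change (Nat.iter 0 Hop (pmonom n)) with (pmonom n).
    change (Nat.iter 0 Hop (pmonom (n-1))) with (pmonom (n-1)).
    rewrite peval_pmonom.
    apply (uniqueness_limite (peval (pmonom n)) y).
    + apply peval_deriv.
    + apply (deriv_ext (fun z => z ^ n)); [intros; now rewrite peval_pmonom|].
      apply deriv_eq with (INR n * y ^ Init.Nat.pred n); [apply derivable_pt_lim_pow|].
      replace (Init.Nat.pred n) with (n - 1)%nat by lia. ring.
  - apply (uniqueness_limite (peval (H2 (S m) n)) y); [apply peval_deriv|].
    apply (deriv_ext (fun z => (- INR n) * H2eval m (n-1) z +
                ((- 2 * INR m) * H2eval (m-1) n z + 2 * (z * H2eval m n z)))).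
    { intros z. rewrite H2_S, peval_Hop, IH. unfold H2eval. ring. }
    apply deriv_eq with ((- INR n) * peval (pderiv (H2 m (n-1))) y +
       ((- 2 * INR m) * peval (pderiv (H2 (m-1) n)) y +
        2 * (H2eval m n y + y * peval (pderiv (H2 m n)) y))).
    { apply D_plus; [apply D_scal, peval_deriv|].
      apply D_plus; [apply D_scal, peval_deriv|]. apply D_scal, D_xmul, peval_deriv. }
    rewrite (IH n y).
    unfold H2eval at 4. simpl (S m - 1)%nat. rewrite Nat.sub_0_r.
    rewrite H2_S, peval_Hop.
    destruct m as [|m].
    + simpl (INR 0). change (INR 1) with 1. unfold H2eval. ring.
    + simpl (S m - 1)%nat. rewrite Nat.sub_0_r.
      assert (E : H2eval (S m) n y = - peval (pderiv (H2 m n)) y + 2 * y * H2eval m n y)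
        by (unfold H2eval; rewrite H2_S, peval_Hop; reflexivity).
      rewrite E. unfold H2eval. rewrite (S_INR (S m)). ring.
Qed.

Lemma H2rec m n y :
  H2eval (S m) n y = 2 * y * H2eval m n y - INR n * H2eval m (n-1) y - 2 * INR m * H2eval (m-1) n y.
Proof. unfold H2eval at 1. rewrite H2_S, peval_Hop, Dform. unfold H2eval. ring. Qed.
Notation isR := (@is_series R_AbsRing R_NormedModule).

Lemma isR_plus (a b : nat -> R) (la lb : R) : isR a la -> isR b lb ->
  isR (fun n => a n + b n) (la + lb).
Proof. intros Ha Hb. exact (is_series_plus a b la lb Ha Hb). Qed.

Lemma isR_scal (c : R) (a : nat -> R) (la : R) : isR a la -> isR (fun n => c * a n) (c * la).
Proof. intros Ha. exact (is_series_scal c a la Ha). Qed.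

Lemma isR_ext (a b : nat -> R) (l : R) : (forall n, a n = b n) -> isR a l -> isR b l.
Proof. apply is_series_ext. Qed.

Lemma isR_shift (a : nat -> R) (l : R) : isR (fun k => a (S k)) l -> a O = 0 -> isR a l.
Proof.
  intros H H0. apply (@is_series_decr_1 R_AbsRing R_NormedModule).
  assert (E : @plus (NormedModule.AbelianMonoid R_AbsRing R_NormedModule) l (@opp (NormedModule.AbelianGroup R_AbsRing R_NormedModule) (a O)) = l).
  { rewrite H0. unfold plus, opp; simpl. rewrite Ropp_0, Rplus_0_r. reflexivity. }
  rewrite E. exact H.
Qed.

Lemma isR_exp z : isR (fun k => z ^ k / INR (fact k)) (exp z).
Proof.
  generalize (is_exp_Reals z). unfold is_pseries. apply isR_ext.
  intros n. rewrite pow_n_pow. unfold scal; simpl. unfold mult; simpl. reflexivity.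
Qed.

Fixpoint Srec (y s : R) (m : nat) : R :=
  match m with
  | O => s
  | S O => y * s
  | S ((S m'') as m') => y * Srec y s m' - 2 * INR m' * Srec y s m''
  end.

Lemma Srec_step y s m : Srec y s (S m) = y * Srec y s m - 2 * INR m * Srec y s (m - 1).
Proof. destruct m as [|m]; simpl; [ring|]. rewrite Nat.sub_0_r. reflexivity. Qed.

Section Inner.
Variables x v : R.
Definition tt m n := H2eval m n x * (v ^ n / INR (fact n)).
Definition PP m := isR (tt m) (Srec (2 * x - v) (exp (v * x)) m).

Lemma PP0 : PP 0.
Proof.
  unfold PP, tt; simpl Srec. apply (isR_ext (fun n => (v * x) ^ n / INR (fact n))); [|apply isR_exp].
  intros n. unfold H2eval; simpl. change (Nat.iter 0 Hop (pmonom n)) with (pmonom n).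
  rewrite peval_pmonom, Rpow_mult_distr. unfold Rdiv; ring.
Qed.

Lemma PPstep m : PP m -> PP (m - 1) -> PP (S m).
Proof.
  unfold PP; intros H1 H2. set (y := 2 * x - v). set (s := exp (v * x)).
  set (w := fun n => INR n * H2eval m (n - 1) x * (v ^ n / INR (fact n))).
  assert (Hw : isR w (v * Srec y s m)).
  { apply isR_shift; [|unfold w; simpl; ring].
    apply (isR_ext (fun k => v * tt m k)); [|apply isR_scal, H1].
    intros k. unfold w, tt. simpl (S k - 1)%nat. rewrite Nat.sub_0_r.
    rewrite fact_simpl, mult_INR.
    assert (INR (fact k) <> 0) by apply INR_fact_neq_0.
    assert (INR (S k) <> 0) by (apply not_0_INR; lia).
    simpl pow. field; auto. }
  rewrite Srec_step.
  replace (y * Srec y s m - 2 * INR m * Srec y s (m - 1)) with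
    ((2 * x) * Srec y s m + ((-1) * (v * Srec y s m) + (- 2 * INR m) * Srec y s (m - 1)))
    by (unfold y; ring).
  apply (isR_ext (fun n => (2 * x) * tt m n + ((-1) * w n + (-2 * INR m) * tt (m - 1) n))).
  { intros n. unfold tt, w. rewrite H2rec. ring. }
  apply isR_plus; [apply isR_scal, H1|].
  apply isR_plus; apply isR_scal; auto.
Qed.

Lemma PPall m : PP m.
Proof.
  assert (forall k, PP k /\ PP (S k)) as H.
  { intros k; induction k as [|k IH].
    - split; [apply PP0|]. apply PPstep; apply PP0.
    - destruct IH as [Ha Hb]. split; auto. apply PPstep; auto. simpl. rewrite Nat.sub_0_r. auto. }
  apply H.
Qed.
End Inner.

Definition spread (a : nat -> R) (j : nat) : R :=
  if Nat.even j then a (Nat.div2 j) else 0.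

Lemma par_facts k : Nat.even (2 * k) = true /\ Nat.even (S (2 * k)) = false /\
  Nat.div2 (2 * k) = k /\ Nat.div2 (S (2 * k)) = k.
Proof.
  induction k as [|k IH]; [simpl; auto|].
  replace (2 * S k)%nat with (S (S (2 * k))) by lia.
  destruct IH as [A [B [C D]]].
  change (Nat.even (2 * k) = true /\ Nat.even (S (2 * k)) = false /\
    S (Nat.div2 (2 * k)) = S k /\ S (Nat.div2 (S (2 * k))) = S k).
  rewrite A, B, C, D. auto.
Qed.

Lemma spread_sum a k : sum_f_R0 (spread a) (2 * k) = sum_f_R0 a k /\
                       sum_f_R0 (spread a) (S (2 * k)) = sum_f_R0 a k.
Proof.
  induction k as [|k IH].
  - simpl. unfold spread; simpl. split; ring.
  - replace (2 * S k)%nat with (S (S (2 * k))) by lia.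
    destruct IH as [A B].
    destruct (par_facts (S k)) as [P1 [P2 [P3 P4]]].
    replace (2 * S k)%nat with (S (S (2 * k))) in P1, P2, P3, P4 by lia.
    split.
    + change (sum_f_R0 (spread a) (S (2 * k)) + spread a (S (S (2 * k))) = sum_f_R0 a k + a (S k)).
      rewrite B. unfold spread. rewrite P1, P3. reflexivity.
    + change (sum_f_R0 (spread a) (S (2 * k)) + spread a (S (S (2 * k))) + spread a (S (S (S (2 * k))))
         = sum_f_R0 a k + a (S k)).
      rewrite B. unfold spread. rewrite P1, P3, P2. ring.
Qed.

Lemma spread_sum_div2 a n : sum_f_R0 (spread a) n = sum_f_R0 a (Nat.div2 n).
Proof.
  rewrite (Nat.div2_odd n) at 1. destruct (Nat.odd n); simpl Nat.b2n.
  - rewrite Nat.add_1_r. apply spread_sum.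
  - rewrite Nat.add_0_r. apply spread_sum.
Qed.

Lemma div2_lim : filterlim Nat.div2 Hierarchy.eventually Hierarchy.eventually.
Proof.
  intros P [N HN]. exists (2 * N)%nat. intros n Hn. apply HN.
  pose proof (Nat.div2_odd n). destruct (Nat.odd n); simpl Nat.b2n in H; lia.
Qed.

Lemma isR_spread a l : isR a l -> isR (spread a) l.
Proof.
  intros H. unfold is_series in *.
  apply (filterlim_ext (fun n => sum_n a (Nat.div2 n))).
  { intros n. rewrite !sum_n_Reals. symmetry. apply spread_sum_div2. }
  exact (filterlim_comp _ _ _ Nat.div2 (sum_n a) Hierarchy.eventually Hierarchy.eventually _ div2_lim H).
Qed.

Definition cc (j : nat) : R := spread (fun b => (-1) ^ b / INR (fact b)) j.
Definition ee (y : R) (k : nat) : R := y ^ k / INR (fact k).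
Definition dd (y : R) (m : nat) : R := sum_f_R0 (fun k => ee y k * cc (m - k)) m.

Lemma even_eq j : Nat.even j = true -> j = (2 * Nat.div2 j)%nat.
Proof.
  intros E. pose proof (Nat.div2_odd j). rewrite <- Nat.negb_even, E in H. simpl in H. lia.
Qed.

Lemma cc_rec j : INR (S (S j)) * cc (S (S j)) = -2 * cc j.
Proof.
  unfold cc, spread.
  change (Nat.even (S (S j))) with (Nat.even j).
  change (Nat.div2 (S (S j))) with (S (Nat.div2 j)).
  destruct (Nat.even j) eqn:E; [|ring].
  rewrite (even_eq j E) at 1. set (b := Nat.div2 j).
  rewrite fact_simpl, mult_INR.
  assert (INR (fact b) <> 0) by apply INR_fact_neq_0.
  assert (INR (S b) <> 0) by (apply not_0_INR; lia).
  replace (INR (S (S (2 * b)))) with (2 * INR (S b)) by (rewrite !S_INR, mult_INR; simpl; ring).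
  simpl pow. field; auto.
Qed.

Lemma ee_rec y i : INR (S i) * ee y (S i) = y * ee y i.
Proof.
  unfold ee. rewrite fact_simpl, mult_INR.
  assert (INR (fact i) <> 0) by apply INR_fact_neq_0.
  assert (INR (S i) <> 0) by (apply not_0_INR; lia).
  simpl pow. field; auto.
Qed.

Lemma sumS f n : sum_f_R0 f (S n) = sum_f_R0 f n + f (S n).
Proof. reflexivity. Qed.

Lemma sum_shift f n : sum_f_R0 f (S n) = f O + sum_f_R0 (fun i => f (S i)) n.
Proof.
  induction n as [|n IH]; [simpl; ring|].
  rewrite sumS, IH, sumS. ring.
Qed.

Lemma dd_rec y m : (INR m + 2) * dd y (S (S m)) = y * dd y (S m) - 2 * dd y m.
Proof.
  unfold dd. rewrite scal_sum.
  rewrite (sum_eq _ (fun i => INR i * (ee y i * cc (S (S m) - i)) +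
                    INR (S (S m) - i) * (ee y i * cc (S (S m) - i)))).
  2:{ intros i Hi. rewrite minus_INR by lia. rewrite (S_INR (S m)), (S_INR m). ring. }
  rewrite plus_sum.
  rewrite (sum_shift (fun i => INR i * (ee y i * cc (S (S m) - i)))).
  rewrite (sum_eq (fun i => INR (S i) * (ee y (S i) * cc (S (S m) - S i)))
                  (fun i => (ee y i * cc (S m - i)) * y)).
  2:{ intros i Hi. replace (S (S m) - S i)%nat with (S m - i)%nat by lia.
      rewrite <- Rmult_assoc, ee_rec. ring. }
  rewrite <- scal_sum.
  rewrite (sumS (fun i => INR (S (S m) - i) * (ee y i * cc (S (S m) - i))) (S m)).
  rewrite (sumS (fun i => INR (S (S m) - i) * (ee y i * cc (S (S m) - i))) m).
  rewrite Nat.sub_diag. replace (S (S m) - S m)%nat with 1%nat by lia.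
  replace (cc 1) with 0 by (unfold cc, spread; reflexivity).
  rewrite (sum_eq (fun i => INR (S (S m) - i) * (ee y i * cc (S (S m) - i)))
                  (fun i => (ee y i * cc (m - i)) * (-2))).
  2:{ intros i Hi. replace (S (S m) - i)%nat with (S (S (m - i))) by lia.
      rewrite (Rmult_comm (ee y i)), <- Rmult_assoc, cc_rec. ring. }
  rewrite <- scal_sum. simpl (INR 0). ring.
Qed.

Lemma Srec_closed y s m : Srec y s m = s * INR (fact m) * dd y m.
Proof.
  assert (forall k, Srec y s k = s * INR (fact k) * dd y k /\
                    Srec y s (S k) = s * INR (fact (S k)) * dd y (S k)) as H.
  { intros k; induction k as [|k [IH1 IH2]].
    - unfold dd, ee, cc, spread; simpl. split; field.
    - split; [exact IH2|].
      change (Srec y s (S (S k))) with (y * Srec y s (S k) - 2 * INR (S k) * Srec y s k).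
      rewrite IH1, IH2.
      replace (s * INR (fact (S (S k))) * dd y (S (S k))) with
        (s * INR (fact k) * INR (S k) * ((INR k + 2) * dd y (S (S k)))).
      2:{ rewrite !fact_simpl, !mult_INR. rewrite (S_INR (S k)), (S_INR k). ring. }
      rewrite dd_rec. rewrite fact_simpl, mult_INR. ring. }
  apply H.
Qed.

Lemma abs_fact_inv k : Rabs (/ INR (fact k)) = / INR (fact k).
Proof.
  apply Rabs_pos_eq. apply Rlt_le, Rinv_0_lt_compat. apply lt_0_INR, lt_O_fact.
Qed.

Lemma outer_series x u v :
  isR (fun m => Srec (2 * x - v) (exp (v * x)) m * (u ^ m / INR (fact m)))
      (exp (- u ^ 2 + (2 * u + v) * x - u * v)).
Proof.
  set (y := 2 * x - v). set (s := exp (v * x)).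
  set (a := fun k => ee y k * u ^ k). set (b := fun j => cc j * u ^ j).
  assert (Ha : isR a (exp (y * u))).
  { apply (isR_ext (fun k => (y * u) ^ k / INR (fact k))); [|apply isR_exp].
    intros k. unfold a, ee. rewrite Rpow_mult_distr. unfold Rdiv; ring. }
  assert (Hb : isR b (exp (- u ^ 2))).
  { apply (isR_ext (spread (fun k => (- u ^ 2) ^ k / INR (fact k)))); [|apply isR_spread, isR_exp].
    intros j. unfold b, cc, spread. destruct (Nat.even j) eqn:E; [|ring].
    replace (u ^ j) with ((u ^ 2) ^ Nat.div2 j) by (rewrite <- pow_mult, <- even_eq; auto).
    replace (- u ^ 2) with ((-1) * u ^ 2) by ring. rewrite Rpow_mult_distr. unfold Rdiv; ring. }
  assert (Haa : ex_series (fun n => Rabs (a n))).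
  { exists (exp (Rabs (y * u))).
    apply (isR_ext (fun k => (Rabs (y * u)) ^ k / INR (fact k))); [|apply isR_exp].
    intros k. unfold a, ee, Rdiv. rewrite !Rabs_mult, abs_fact_inv, <- !RPow_abs.
    rewrite Rpow_mult_distr. ring. }
  assert (Hbb : ex_series (fun n => Rabs (b n))).
  { exists (exp (u ^ 2)).
    apply (isR_ext (spread (fun k => (u ^ 2) ^ k / INR (fact k)))); [|apply isR_spread, isR_exp].
    intros j. unfold b, cc, spread. destruct (Nat.even j) eqn:E.
    - replace (u ^ j) with ((u ^ 2) ^ Nat.div2 j) by (rewrite <- pow_mult, <- even_eq; auto).
      unfold Rdiv.
      rewrite !Rabs_mult, abs_fact_inv, pow_1_abs.
      rewrite (Rabs_pos_eq ((u ^ 2) ^ _)); [ring|]. apply pow_le. apply pow2_ge_0.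
    - rewrite Rmult_0_l, Rabs_R0. reflexivity. }
  pose proof (is_series_mult a b _ _ Ha Hb Haa Hbb) as HC.
  apply (isR_scal s) in HC.
  replace (exp (- u ^ 2 + (2 * u + v) * x - u * v)) with (s * (exp (y * u) * exp (- u ^ 2))).
  2:{ unfold s, y. rewrite <- !exp_plus. f_equal. ring. }
  revert HC. apply isR_ext. intros m.
  rewrite Srec_closed. unfold dd.
  rewrite (sum_eq (fun k => a k * b (m - k)%nat) (fun k => (ee y k * cc (m - k)) * u ^ m)).
  2:{ intros i Hi. unfold a, b. replace (u ^ m) with (u ^ i * u ^ (m - i)).
      - ring.
      - rewrite <- pow_add. f_equal. lia. }
  rewrite <- scal_sum. fold s.
  assert (INR (fact m) <> 0) by apply INR_fact_neq_0. field; auto.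
Qed.

Theorem mainTheorem12 (x u v : R) :
  exists A : nat -> R,
    (forall m : nat,
       infinite_sum
         (fun n : nat => H2eval m n x * (u ^ m / INR (fact m)) * (v ^ n / INR (fact n)))
         (A m)) /\
    infinite_sum A (exp (- u ^ 2 + (2 * u + v) * x - u * v)).
Proof.
  exists (fun m => Srec (2 * x - v) (exp (v * x)) m * (u ^ m / INR (fact m))).
  split.
  - intros m. apply is_series_Reals.
    pose proof (PPall x v m) as H. unfold PP in H.
    apply (isR_scal (u ^ m / INR (fact m))) in H.
    rewrite Rmult_comm. revert H. apply isR_ext. intros n. unfold tt. ring.
  - apply is_series_Reals. apply outer_series.
Qed.
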